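(* In any packing produced by the algorithm OnlinePacker (described in the context), there are at most two near-empty boxes of each box type.
   Context: Setting: online translational strip packing. The strip is a horizontal strip of height 1, bounded on the left by a vertical segment and unbounded to the right. Pieces arrive one at a time, each must be placed by a translation only, interior-disjoint from previously placed pieces, before the next piece is revealed. Here all pieces are horizontal parallelograms (parallelograms with a pair of horizontal edges, the base edges) of height 1 and width at most 1. Box types: these form an infinite ternary tree. The root, the basic box type, is a 2 x 1 rectangle. A d-dimensional box type is a vector [x_1,...,x_d] in {-1,0,+1}^d and is a horizontal parallelogram of height 1. Given type T = [x_1,...,x_d] with bottom edge b and top edge t, split b into three equal consecutive segments b_{-1}, b_0, b_{+1} (left to right) and t likewise into t_{-1}, t_0, t_{+1}; the child type T ⊕ [x_{d+1}] = [x_1,...,x_d,x_{d+1}] is the parallelogram spanned by b_0 and t_{x_{d+1}}. Thus a d-dimensional type has base edges of length 2·3^{-d}. A box type T matches a piece P if P can be packed into T and area(T) ≤ 6·area(P) (such a type exists for every such P). A type is suitable for P if it is an ancestor (including itself) in the tree of a type matching P. Algorithm OnlinePacker: space in the strip is allocated for boxes of the various types; each box of type T contains either a single piece that T matches, or one, two or three boxes whose types are children of T. When a piece P arrives: if there exists an allocated box B_1 whose type T_1 is suitable for P (with T_1,...,T_k the tree path from T_1 to a type T_k matching P) and B_1 has room for one more box of type T_2, choose such a B_1 as small as possible (maximum dimension); then for i = 1,...,k-1 allocate in B_i a new empty box B_{i+1} of type T_{i+1} placed as far left in B_i as possible, and finally place P in B_k. If no such B_1 exists, allocate a new box of the basic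 type as far left in the strip as possible (not overlapping already allocated boxes), call it B_1, and proceed the same way. A d-dimensional box is near-empty if exactly one (d+1)-dimensional box is allocated in it. *)

(* Defs.v *)
From Stdlib Require Import Reals List.
Import ListNotations.
Open Scope R_scope.

(* A horizontal parallelogram of height 1 lying in the strip (height 1 *)
(* forces y in [0,1]) is described by the x-coordinate [a] of its      *)
(* bottom-left corner, the length [l] of its base edges, and its shear *)
(* [s] = (x of top-left corner) - (x of bottom-left corner).           *)

Definition region := (R * R) -> Prop.

Definition para (a l s : R) : region :=
  fun p => 0 <= snd p <= 1 /\ a + s * snd p <= fst p <= a + s * snd p + l.

Definition ipara (a l s : R) : region :=
  fun p => 0 < snd p < 1 /\ a + s * snd p < fst p < a + s * snd p + l.

Definition strip : region := fun p => 0 <= fst p /\ 0 <= snd p <= 1.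

Definition rsubset (A B : region) : Prop := forall p, A p -> B p.
Definition rdisjoint (A B : region) : Prop := forall p, ~ (A p /\ B p).

(* Width = horizontal extent = base length + |shear|.                  *)

Record piece := Piece { pl : R ; psh : R }.

Definition valid_piece (P : piece) : Prop :=
  0 < pl P /\ pl P + Rabs (psh P) <= 1.

(* area of a height-1 parallelogram = base length *)
Definition piece_area (P : piece) : R := pl P.

(* Box types: vectors in {-1,0,+1}^d, i.e. paths from the root of the  *)
(* ternary tree.  [x_1; ...; x_d] lists the coordinates from the root. *)

Inductive dir := DMinus | DZero | DPlus.

Definition dval (x : dir) : R :=
  match x with DMinus => -1 | DZero => 0 | DPlus => 1 end.

Definition dir_eq_dec (x y : dir) : {x = y} + {x <> y}.
Proof. decide equality. Defined.

Definition btype := list dir.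

(* Shape (base length, shear) of a type.  If T has base length w and   *)
(* shear s, with bottom edge starting at b and top edge at b + s, then *)
(* the child T (+) [x] is spanned by b_0 = [b + w/3, b + 2w/3] and      *)
(* t_x = [b + s + (x+1) w/3, b + s + (x+2) w/3]: base w/3, shear        *)
(* s + x w/3.  The root (basic type) is the 2 x 1 rectangle.           *)
Fixpoint shape_aux (l s : R) (T : btype) : R * R :=
  match T with
  | nil => (l, s)
  | x :: T' => shape_aux (l / 3) (s + dval x * (l / 3)) T'
  end.

Definition shape (T : btype) : R * R := shape_aux 2 0 T.
Definition type_len (T : btype) : R := fst (shape T).
Definition type_shear (T : btype) : R := snd (shape T).
Definition type_area (T : btype) : R := type_len T.

Definition packs_into (P : piece) (T : btype) : Prop :=
  exists u, rsubset (para u (pl P) (psh P)) (para 0 (type_len T) (type_shear T)).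

Definition matches (T : btype) (P : piece) : Prop :=
  packs_into P T /\ type_area T <= 6 * piece_area P.

Definition suitable (T : btype) (P : piece) : Prop :=
  exists ext, matches (T ++ ext) P.

(* Allocated boxes are stored in a list; a box's identity is its index *)
(* in that list.  [bparent] is the index of the box it was allocated   *)
(* in (None for boxes of the basic type allocated in the strip).       *)

Record box := Box { btyp : btype ; bpos : R ; bparent : option nat }.

Record placed := Placed { ppiece : piece ; ppos : R ; pbox : nat }.

Record state := State { boxes : list box ; pieces : list placed }.

Definition init_state : state := State nil nil.

Definition dummy_box : box := Box nil 0 None.

Definition box_at (st : state) (i : nat) : box := nth i (boxes st) dummy_box.

Definition box_region (b : box) : region :=
  para (bpos b) (type_len (btyp b)) (type_shear (btyp b)).
Definition box_interior (b : box) : region :=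
  ipara (bpos b) (type_len (btyp b)) (type_shear (btyp b)).

Definition type_region (T : btype) (x : R) : region :=
  para x (type_len T) (type_shear T).
Definition type_interior (T : btype) (x : R) : region :=
  ipara x (type_len T) (type_shear T).

Definition is_child_of (i : nat) (b : box) : bool :=
  match bparent b with Some p => Nat.eqb p i | None => false end.

Definition nchildren (st : state) (i : nat) : nat :=
  length (filter (is_child_of i) (boxes st)).

Definition no_piece_in (st : state) (i : nat) : Prop :=
  forall q, In q (pieces st) -> pbox q <> i.

Definition room_at (st : state) (i : nat) (T : btype) (x : R) : Prop :=
  rsubset (type_region T x) (box_region (box_at st i)) /\
  forall b, In b (boxes st) -> is_child_of i b = true ->
    rdisjoint (type_interior T x) (box_interior b).

Definition leftmost_in_box (st : state) (i : nat) (T : btype) (x : R) : Prop :=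
  room_at st i T x /\ forall y, room_at st i T y -> x <= y.

Definition strip_room (st : state) (x : R) : Prop :=
  rsubset (type_region nil x) strip /\
  forall b, In b (boxes st) -> rdisjoint (type_interior nil x) (box_interior b).

Definition leftmost_in_strip (st : state) (x : R) : Prop :=
  strip_room st x /\ forall y, strip_room st y -> x <= y.

Definition add_box (st : state) (b : box) : state :=
  State (boxes st ++ [b]) (pieces st).

Definition add_piece (st : state) (q : placed) : state :=
  State (boxes st) (pieces st ++ [q]).

(* [chain st i ext st' j]: starting in box B_i = box i, successively     *)
(* allocate B_{i+1} of type T_i (+) [x] as far left as possible in B_i,  *)
(* for x ranging over ext; j is the index of the last box B_k.          *)
Inductive chain : state -> nat -> list dir -> state -> nat -> Prop :=
  | chain_nil st i : chain st i nil st i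
  | chain_cons st i d ext x st' j :
      leftmost_in_box st i (btyp (box_at st i) ++ [d]) x ->
      chain (add_box st (Box (btyp (box_at st i) ++ [d]) x (Some i)))
            (length (boxes st)) ext st' j ->
      chain st i (d :: ext) st' j.

(* Allocated box i (of type T_1) is an eligible B_1 for P, with tree path *)
(* T_1, T_2 = T_1 (+) [d], ..., T_k = T_1 ++ d :: ext matching P, and    *)
(* B_1 has room for one more box of type T_2.                           *)
Definition candidate (st : state) (P : piece) (i : nat) (d : dir) (ext : list dir) : Prop :=
  (i < length (boxes st))%nat /\
  no_piece_in st i /\
  matches (btyp (box_at st i) ++ d :: ext) P /\
  exists x, room_at st i (btyp (box_at st i) ++ [d]) x.

Definition piece_fits (st : state) (P : piece) (j : nat) (u : R) : Prop :=
  rsubset (para u (pl P) (psh P)) (box_region (box_at st j)).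

(* One step of OnlinePacker on piece P (all admissible choices). *)
Inductive step (st : state) (P : piece) : state -> Prop :=
  | step_existing i d ext st' j u :
      candidate st P i d ext ->
      (* B_1 as small as possible: maximum dimension among candidates *)
      (forall i' d' ext', candidate st P i' d' ext' ->
         (length (btyp (box_at st i')) <= length (btyp (box_at st i)))%nat) ->
      chain st i (d :: ext) st' j ->
      piece_fits st' P j u ->
      step st P (add_piece st' (Placed P u j))
  | step_new x ext st' j u :
      (forall i d ext', ~ candidate st P i d ext') ->
      leftmost_in_strip st x ->
      matches ext P ->
      chain (add_box st (Box nil x None)) (length (boxes st)) ext st' j ->
      piece_fits st' P j u ->
      step st P (add_piece st' (Placed P u j)).

Inductive reachable : state -> Prop :=
  | reach_init : reachable init_state
  | reach_step st P st' : reachable st -> valid_piece P -> step st P st' -> reachable st'.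

Definition near_empty (st : state) (i : nat) : Prop := nchildren st i = 1%nat.

(* Main.v *)
Require Import Defs.
From Stdlib Require Import Reals List Lra Lia Psatz.
Import ListNotations.
Open Scope R_scope.

Lemma shape_aux_snoc T : forall l s d,
  shape_aux l s (T ++ [d]) = (fst (shape_aux l s T) / 3,
     snd (shape_aux l s T) + dval d * (fst (shape_aux l s T) / 3)).
Proof. induction T as [|x T IH]; intros; simpl; [reflexivity| apply IH]. Qed.

Lemma len_snoc T d : type_len (T ++ [d]) = type_len T / 3.
Proof. unfold type_len, shape. rewrite shape_aux_snoc. reflexivity. Qed.
Lemma shear_snoc T d : type_shear (T ++ [d]) = type_shear T + dval d * (type_len T / 3).
Proof. unfold type_len, type_shear, shape. rewrite shape_aux_snoc. reflexivity. Qed.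

Lemma shape_aux_pos T : forall l s, 0 < l -> 0 < fst (shape_aux l s T).
Proof. induction T as [|x T IH]; intros; simpl; [lra| apply IH; lra]. Qed.
Lemma type_len_pos T : 0 < type_len T.
Proof. unfold type_len, shape. apply shape_aux_pos. lra. Qed.

Definition coff (c : dir) (w : R) : R := match c with DMinus => w/3 | _ => 0 end.
Definition opp (c d : dir) : Prop := (c = DPlus /\ d = DMinus) \/ (c = DMinus /\ d = DPlus).
Definition u2 (c d : dir) (w : R) : R :=
  match c, d with
  | DZero, DMinus => 2*w/3 | DZero, _ => w/3
  | DPlus, DPlus => w/3 | DPlus, _ => 2*w/3
  | DMinus, _ => 2*w/3 end.

Lemma contain_ok a w s d u : 0 < w -> 0 <= u -> u + w/3 <= w ->
  0 <= u + dval d * (w/3) -> u + dval d * (w/3) + w/3 <= w ->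
  rsubset (para (a+u) (w/3) (s + dval d * (w/3))) (para a w s).
Proof.
  unfold rsubset, para; intros Hw H1 H2 H3 H4 [px py] [Hy Hx]; simpl in *; split; [exact Hy|].
  set (k := dval d * (w/3)) in *.
  assert (0 <= (1-py)*u) by (apply Rmult_le_pos; lra).
  assert (0 <= py*(u+k)) by (apply Rmult_le_pos; lra).
  assert (0 <= (1-py)*(w - u - w/3)) by (apply Rmult_le_pos; lra).
  assert (0 <= py*(w - (u+k) - w/3)) by (apply Rmult_le_pos; lra).
  split; nra.
Qed.

Lemma coff_contain a w s d : 0 < w ->
  rsubset (para (a + coff d w) (w/3) (s + dval d * (w/3))) (para a w s).
Proof. intros Hw; apply contain_ok; auto; destruct d; simpl; lra. Qed.

Lemma u2_contain a w s c d : 0 < w -> ~ opp c d ->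
  rsubset (para (a + u2 c d w) (w/3) (s + dval d * (w/3))) (para a w s).
Proof. intros Hw Ho; unfold opp in Ho; apply contain_ok; auto;
  destruct c, d; simpl; try lra; exfalso; tauto. Qed.

Lemma u2_disj a w s c d : 0 < w -> ~ opp c d ->
  rdisjoint (ipara (a + u2 c d w) (w/3) (s + dval d * (w/3)))
            (ipara (a + coff c w) (w/3) (s + dval c * (w/3))).
Proof.
  unfold rdisjoint, ipara; intros Hw Ho [px py] [[Hy1 Hx1] [Hy2 Hx2]]; simpl in *.
  assert (0 < w*py) by (apply Rmult_lt_0_compat; lra).
  assert (0 < w*(1-py)) by (apply Rmult_lt_0_compat; lra).
  unfold opp in Ho; destruct c, d; simpl in *; try (exfalso; tauto); nra.
Qed.

Lemma lower_bound a w s d x : 0 < w ->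
  rsubset (para x (w/3) (s + dval d * (w/3))) (para a w s) -> a + coff d w <= x.
Proof.
  intros Hw H.
  assert (H0 := H (x, 0)). assert (H1 := H (x + (s + dval d * (w/3)), 1)).
  unfold para in *; simpl in *.
  assert (A0 : a + s*0 <= x) by (apply H0; split; lra).
  assert (A1 : a + s*1 <= x + (s + dval d * (w/3))) by (apply H1; split; lra).
  destruct d; simpl in *; lra.
Qed.

Lemma child_true i b : is_child_of i b = true <-> bparent b = Some i.
Proof. unfold is_child_of; destruct (bparent b) as [p|]; split; intro H; try discriminate.
  - apply Nat.eqb_eq in H; subst; reflexivity.
  - inversion H; subst; apply Nat.eqb_refl. Qed.

Lemma nchildren_add S b k : nchildren (add_box S b) k =
  (nchildren S k + if is_child_of k b then 1 else 0)%nat.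
Proof. unfold nchildren, add_box; simpl. rewrite filter_app, length_app. simpl.
  destruct (is_child_of k b); simpl; lia. Qed.

Lemma box_at_add_old S b k : (k < length (boxes S))%nat -> box_at (add_box S b) k = box_at S k.
Proof. intros; unfold box_at, add_box; simpl; apply app_nth1; auto. Qed.

Lemma box_at_add_new S b : box_at (add_box S b) (length (boxes S)) = b.
Proof. unfold box_at, add_box; simpl. rewrite app_nth2 by lia. rewrite Nat.sub_diag. reflexivity. Qed.

Lemma nchildren_one_child S i : nchildren S i = 1%nat ->
  exists b, In b (boxes S) /\ bparent b = Some i.
Proof. unfold nchildren; intro H.
  destruct (filter (is_child_of i) (boxes S)) as [|z l] eqn:E; simpl in H; [lia|].
  exists z. assert (Hz : In z (filter (is_child_of i) (boxes S))) by (rewrite E; left; auto).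
  apply filter_In in Hz; destruct Hz; split; auto; apply child_true; auto. Qed.

Lemma nchildren_one_unique S i a b : nchildren S i = 1%nat ->
  In a (boxes S) -> bparent a = Some i -> In b (boxes S) -> bparent b = Some i -> a = b.
Proof. unfold nchildren; intros H Ha Pa Hb Pb.
  assert (Fa : In a (filter (is_child_of i) (boxes S))) by (apply filter_In; split; auto; apply child_true; auto).
  assert (Fb : In b (filter (is_child_of i) (boxes S))) by (apply filter_In; split; auto; apply child_true; auto).
  destruct (filter (is_child_of i) (boxes S)) as [|z [|z' l]]; simpl in H; try lia.
  destruct Fa as [Fa|[]]; destruct Fb as [Fb|[]]; congruence. Qed.

Lemma nchildren_pos S i b : In b (boxes S) -> bparent b = Some i -> (1 <= nchildren S i)%nat.
Proof. unfold nchildren; intros Hb Pb.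
  assert (Fb : In b (filter (is_child_of i) (boxes S))) by (apply filter_In; split; auto; apply child_true; auto).
  destruct (filter (is_child_of i) (boxes S)); simpl in *; [contradiction| lia]. Qed.

Lemma nchildren_zero S i b : nchildren S i = 0%nat -> In b (boxes S) -> bparent b <> Some i.
Proof. intros H Hb Pb. pose proof (nchildren_pos S i b Hb Pb). lia. Qed.

Definition typeof S i := btyp (box_at S i).

Lemma room_first S i d : (forall b, In b (boxes S) -> bparent b <> Some i) ->
  room_at S i (btyp (box_at S i) ++ [d])
     (bpos (box_at S i) + coff d (type_len (btyp (box_at S i)))).
Proof. intros H; split.
  - unfold type_region, box_region. rewrite len_snoc, shear_snoc.
    apply coff_contain, type_len_pos.
  - intros b Hb Hc. apply child_true in Hc. exfalso; exact (H b Hb Hc). Qed.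

Lemma leftmost_pos S i d x : (forall b, In b (boxes S) -> bparent b <> Some i) ->
  leftmost_in_box S i (btyp (box_at S i) ++ [d]) x ->
  x = bpos (box_at S i) + coff d (type_len (btyp (box_at S i))).
Proof. intros H [[Hc _] Hmin].
  pose proof (Hmin _ (room_first S i d H)).
  unfold type_region, box_region in Hc. rewrite len_snoc, shear_snoc in Hc.
  pose proof (lower_bound _ _ _ _ _ (type_len_pos _) Hc). lra. Qed.

Lemma room_second S i bc c d :
  (forall b, In b (boxes S) -> bparent b = Some i -> b = bc) ->
  btyp bc = btyp (box_at S i) ++ [c] ->
  bpos bc = bpos (box_at S i) + coff c (type_len (btyp (box_at S i))) ->
  ~ opp c d -> exists y, room_at S i (btyp (box_at S i) ++ [d]) y.
Proof. intros Hu Ht Hp Ho.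
  exists (bpos (box_at S i) + u2 c d (type_len (btyp (box_at S i)))). split.
  - unfold type_region, box_region. rewrite len_snoc, shear_snoc.
    apply u2_contain; auto; apply type_len_pos.
  - intros b Hb Hc. apply child_true in Hc. rewrite (Hu b Hb Hc).
    unfold type_interior, box_interior. rewrite Ht, Hp, !len_snoc, !shear_snoc.
    apply u2_disj; auto; apply type_len_pos. Qed.

Definition IA1 st := forall b, In b (boxes st) -> forall p, bparent b = Some p ->
  (p < length (boxes st))%nat /\ exists c, btyp b = btyp (box_at st p) ++ [c].
Definition IA2 st := forall i b c, nchildren st i = 1%nat -> In b (boxes st) ->
  bparent b = Some i -> btyp b = btyp (box_at st i) ++ [c] ->
  bpos b = bpos (box_at st i) + coff c (type_len (btyp (box_at st i))).
Definition IA5 st := forall i j bi bj ci cj, i <> j ->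
  btyp (box_at st i) = btyp (box_at st j) ->
  nchildren st i = 1%nat -> nchildren st j = 1%nat ->
  In bi (boxes st) -> bparent bi = Some i -> In bj (boxes st) -> bparent bj = Some j ->
  btyp bi = btyp (box_at st i) ++ [ci] -> btyp bj = btyp (box_at st j) ++ [cj] -> opp ci cj.
Definition Inv st := IA1 st /\ IA2 st /\ IA5 st.

Lemma opp_dec c d : opp c d \/ ~ opp c d.
Proof. unfold opp; destruct c, d; try (left; tauto); right; intuition discriminate. Qed.
Lemma opp_sym c d : opp c d -> opp d c.
Proof. unfold opp; tauto. Qed.

Lemma fresh_opp S i j d bj cj : IA2 S ->
  (~ exists y, room_at S j (btyp (box_at S i) ++ [d]) y) ->
  btyp (box_at S j) = btyp (box_at S i) -> nchildren S j = 1%nat ->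
  In bj (boxes S) -> bparent bj = Some j -> btyp bj = btyp (box_at S j) ++ [cj] -> opp cj d.
Proof. intros HA2 Hno Ht Hn Hb Pb Tb.
  destruct (opp_dec cj d) as [|Ho]; auto. exfalso; apply Hno. rewrite <- Ht.
  apply (room_second S j bj cj d); auto.
  intros b Hb' Pb'. exact (nchildren_one_unique S j b bj Hn Hb' Pb' Hb Pb). Qed.

Lemma app_snoc_inj (T : btype) c d : T ++ [c] = T ++ [d] -> c = d.
Proof. intro H. apply app_inv_head in H. congruence. Qed.

Lemma add_child_pres S i d x :
  Inv S -> (i < length (boxes S))%nat ->
  leftmost_in_box S i (btyp (box_at S i) ++ [d]) x ->
  (nchildren S i = 0%nat -> forall j, j <> i -> btyp (box_at S j) = btyp (box_at S i) ->
     nchildren S j = 1%nat -> ~ exists y, room_at S j (btyp (box_at S i) ++ [d]) y) ->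
  Inv (add_box S (Box (btyp (box_at S i) ++ [d]) x (Some i))).
Proof.
  intros [H1 [H2 H5]] Hi Hl Hfr.
  set (nb := Box (btyp (box_at S i) ++ [d]) x (Some i)).
  assert (Hin : forall b, In b (boxes (add_box S nb)) -> In b (boxes S) \/ b = nb).
  { intros b Hb; simpl in Hb; apply in_app_iff in Hb; destruct Hb as [Hb|[Hb|Hb]]; [left; exact Hb|right; symmetry; exact Hb|destruct Hb]. }
  assert (Plt : forall b p, In b (boxes (add_box S nb)) -> bparent b = Some p -> (p < length (boxes S))%nat).
  { intros b p Hb Pb; destruct (Hin b Hb) as [Hb'| ->]. apply (H1 b Hb' p Pb). simpl in Pb; congruence. }
  assert (Nlt : forall k, nchildren (add_box S nb) k = 1%nat -> (k < length (boxes S))%nat).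
  { intros k Hk; destruct (nchildren_one_child _ _ Hk) as [b [Hb Pb]]; eauto. }
  assert (Nk : forall k, nchildren (add_box S nb) k = 1%nat -> k <> i -> nchildren S k = 1%nat).
  { intros k Hk Hne. rewrite nchildren_add in Hk. unfold nb, is_child_of in Hk; simpl in Hk.
    destruct (Nat.eqb_spec i k); [congruence|lia]. }
  assert (Ni : nchildren (add_box S nb) i = 1%nat -> nchildren S i = 0%nat).
  { intros Hk. rewrite nchildren_add in Hk. unfold nb, is_child_of in Hk; simpl in Hk.
    rewrite Nat.eqb_refl in Hk. lia. }
  assert (Old : forall k b, k <> i -> In b (boxes (add_box S nb)) -> bparent b = Some k -> In b (boxes S)).
  { intros k b Hne Hb Pb. destruct (Hin b Hb) as [| ->]; auto. simpl in Pb; congruence. }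
  assert (New : forall b, nchildren S i = 0%nat -> In b (boxes (add_box S nb)) -> bparent b = Some i -> b = nb).
  { intros b HZ Hb Pb. destruct (Hin b Hb) as [Hb'|]; auto. exfalso; exact (nchildren_zero S i b HZ Hb' Pb). }
  split; [|split].
  - intros b Hb p Pb. pose proof (Plt b p Hb Pb).
    rewrite box_at_add_old by auto. simpl; rewrite length_app; simpl.
    split; [lia|]. destruct (Hin b Hb) as [Hb'| ->].
    + apply (H1 b Hb' p Pb).
    + simpl in Pb; inversion Pb; subst; exists d; reflexivity.
  - intros k b c Hk Hb Pb Tb. pose proof (Nlt k Hk).
    rewrite box_at_add_old in * by auto.
    destruct (Nat.eq_dec k i) as [-> |Hne].
    + pose proof (Ni Hk) as HZ. rewrite (New b HZ Hb Pb) in Tb |- *. simpl in Tb |- *.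
      apply app_snoc_inj in Tb; subst c.
      apply leftmost_pos; auto. intros b' Hb' Pb'. exact (nchildren_zero S i b' HZ Hb' Pb').
    + apply H2; auto.
      eapply Old; eauto.
  - intros k j bk bj ck cj Hne Ht Hk Hj Hbk Pk Hbj Pj Tk Tj.
    pose proof (Nlt k Hk). pose proof (Nlt j Hj).
    rewrite !box_at_add_old in * by auto.
    destruct (Nat.eq_dec k i) as [-> |Hki]; [|destruct (Nat.eq_dec j i) as [-> |Hji]].
    + pose proof (Ni Hk) as HZ. rewrite (New bk HZ Hbk Pk) in Tk. simpl in Tk.
      apply app_snoc_inj in Tk; subst ck.
      apply opp_sym. assert (Nj := Nk j Hj (not_eq_sym Hne)).
      apply (fresh_opp S i j d bj cj H2 (Hfr HZ j (not_eq_sym Hne) (eq_sym Ht) Nj) (eq_sym Ht) Nj); auto.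
      eapply Old; [exact (not_eq_sym Hne)|eauto|eauto].
    + pose proof (Ni Hj) as HZ. rewrite (New bj HZ Hbj Pj) in Tj. simpl in Tj.
      apply app_snoc_inj in Tj; subst cj.
      assert (Nj := Nk k Hk Hne).
      apply (fresh_opp S i k d bk ck H2 (Hfr HZ k Hne Ht Nj) Ht Nj); auto.
      eapply Old; [exact Hne|eauto|eauto].
    + apply (H5 k j bk bj ck cj); auto.
      all: try (apply Nk; auto).
      exact (Old k bk Hki Hbk Pk). exact (Old j bj Hji Hbj Pj).
Qed.

Definition Lok st0 (L : list box) := forall b, In b L -> forall p, bparent b = Some p ->
  (length (boxes st0) <= p)%nat \/ no_piece_in st0 p.

Lemma box_at_app st0 St L k : boxes St = boxes st0 ++ L -> (k < length (boxes st0))%nat ->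
  box_at St k = box_at st0 k.
Proof. intros E Hk; unfold box_at; rewrite E; apply app_nth1; auto. Qed.

Lemma nchildren_mono St St' L k : boxes St' = boxes St ++ L -> (nchildren St k <= nchildren St' k)%nat.
Proof. intros E; unfold nchildren; rewrite E, filter_app, length_app; lia. Qed.

Lemma nchildren_fresh St : IA1 St -> nchildren St (length (boxes St)) = 0%nat.
Proof. intros H1. destruct (nchildren St (length (boxes St))) eqn:E; auto.
  exfalso. unfold nchildren in E.
  destruct (filter (is_child_of (length (boxes St))) (boxes St)) as [|z l] eqn:F; [discriminate|].
  assert (Hz : In z (filter (is_child_of (length (boxes St))) (boxes St))) by (rewrite F; left; auto).
  apply filter_In in Hz as [Hz Cz]. apply child_true in Cz.
  destruct (H1 z Hz _ Cz); lia. Qed.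

Lemma nchildren_exists St k : (1 <= nchildren St k)%nat -> exists b, In b (boxes St) /\ bparent b = Some k.
Proof. unfold nchildren; intros H.
  destruct (filter (is_child_of k) (boxes St)) as [|z l] eqn:F; simpl in H; [lia|].
  assert (Hz : In z (filter (is_child_of k) (boxes St))) by (rewrite F; left; auto).
  apply filter_In in Hz as [Hz Cz]. apply child_true in Cz. eauto. Qed.

Lemma room_mono st0 St L j U y : boxes St = boxes st0 ++ L -> (j < length (boxes st0))%nat ->
  room_at St j U y -> room_at st0 j U y.
Proof. intros E Hj [Hc Hd]. unfold room_at. rewrite <- (box_at_app st0 St L j E Hj). split; auto.
  intros b Hb. apply Hd. rewrite E; apply in_app_iff; auto. Qed.

Definition Hcase st0 P St i :=
  ((i < length (boxes st0))%nat /\ no_piece_in st0 i /\ (1 <= nchildren St i)%nat /\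
     (forall i' d' e', candidate st0 P i' d' e' ->
        (length (btyp (box_at st0 i')) <= length (typeof St i))%nat))
  \/ ((length (boxes st0) <= i)%nat /\ nchildren St i = 0%nat /\
     (forall i' d' e', candidate st0 P i' d' e' ->
        (length (btyp (box_at st0 i')) < length (typeof St i))%nat)).

Lemma chain_pres st0 P (HI6 : forall k, (1 <= nchildren st0 k)%nat -> no_piece_in st0 k) :
  forall St i ext St' j, chain St i ext St' j ->
  forall L, Inv St -> (i < length (boxes St))%nat -> boxes St = boxes st0 ++ L -> Lok st0 L ->
  (forall k, (length (boxes st0) <= k < length (boxes St))%nat -> k <> i ->
      (length (typeof St k) < length (typeof St i))%nat) ->
  Hcase st0 P St i ->
  matches (typeof St i ++ ext) P ->
  Inv St' /\ pieces St' = pieces St /\ (j < length (boxes St'))%nat /\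
  (exists L2, boxes St' = boxes St ++ L2 /\
     forall b, In b L2 -> forall p, bparent b = Some p -> p = i \/ (length (boxes St) <= p)%nat) /\
  (ext = nil -> St' = St /\ j = i) /\
  (ext <> nil -> (length (boxes St) <= j)%nat /\ nchildren St' j = 0%nat) /\
  (forall k, ((length (boxes St) <= k < length (boxes St'))%nat \/ k = i) -> k <> j ->
     (1 <= nchildren St' k)%nat).
Proof.
  induction 1 as [St i | St i d ext x St' j Hleft Hch IH];
    intros L HInv Hi EL HL Hfresh Hc Hm.
  - split; [auto|split; [auto|split; [auto|split]]].
    + exists nil; split; [rewrite app_nil_r; auto| intros b []].
    + split; [auto|split; [intros H; congruence|]].
      intros k [Hk| ->] Hne; [lia|congruence].
  - set (T := btyp (box_at St i)) in *.
    set (nb := Box (T ++ [d]) x (Some i)).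
    set (St1 := add_box St nb).
    pose proof HInv as [H1 [H2 H5]].
    assert (Inv1 : Inv St1).
    { apply add_child_pres; auto.
      intros H0 j' Hne Ht Hn [y Hy].
      destruct Hc as [[_ [_ [Hc _]]] | [Hge [_ Hmax]]]; [lia|].
      destruct (nchildren_one_child St j' Hn) as [bj [Hbj Pbj]].
      assert (Hj' : (j' < length (boxes St))%nat) by (apply (H1 bj Hbj j' Pbj)).
      destruct (Nat.lt_ge_cases j' (length (boxes st0))) as [Hlt|Hge'].
      - assert (Hcand : candidate st0 P j' d ext).
        { unfold candidate. rewrite <- (box_at_app st0 St L j' EL Hlt). rewrite Ht.
          split; [auto|split; [|split; [exact Hm|]]].
          - rewrite EL in Hbj. apply in_app_iff in Hbj as [Hbj|Hbj].
            + apply HI6. idtac.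
              exact (nchildren_pos st0 j' bj Hbj Pbj).
            + destruct (HL bj Hbj j' Pbj); [lia|auto].
          - exists y. apply (room_mono st0 St L j' _ y EL Hlt). exact Hy. }
        pose proof (Hmax _ _ _ Hcand). rewrite <- (box_at_app st0 St L j' EL Hlt) in H.
        unfold typeof in H. rewrite Ht in H. exact (Nat.lt_irrefl _ H).
      - pose proof (Hfresh j' (conj Hge' Hj') Hne). unfold typeof in H. rewrite Ht in H. exact (Nat.lt_irrefl _ H). }
    assert (LenS1 : length (boxes St1) = Datatypes.S (length (boxes St))).
    { unfold St1, add_box; simpl; rewrite length_app; simpl; lia. }
    assert (N0 : nchildren St1 (length (boxes St)) = 0%nat).
    { unfold St1; rewrite nchildren_add, (nchildren_fresh St H1). unfold nb, is_child_of; simpl.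
      destruct (Nat.eqb_spec i (length (boxes St))); [lia|reflexivity]. }
    assert (Ty1 : typeof St1 (length (boxes St)) = T ++ [d]).
    { unfold typeof, St1; rewrite box_at_add_new; reflexivity. }
    assert (Told : forall k, (k < length (boxes St))%nat -> typeof St1 k = typeof St k).
    { intros k Hk; unfold typeof, St1; rewrite box_at_add_old; auto. }
    fold nb in IH. fold St1 in IH.
    destruct (IH (L ++ [nb])) as [IS' [PS' [Hj [[L2 [EL2 PL2]] [Hnil [Hcons Hkids]]]]]].
    + exact Inv1.
    + simpl; rewrite length_app; simpl; lia.
    + unfold St1, add_box; simpl; rewrite EL, app_assoc; reflexivity.
    + intros b Hb p Pb. apply in_app_iff in Hb as [Hb|[Hb|[]]]; [exact (HL b Hb p Pb)|].
      subst b; simpl in Pb; inversion Pb; subst p.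
      destruct Hc as [[_ [Hnp _]] | [Hge _]]; auto.
    + intros k [Hk1 Hk2] Hne. rewrite Ty1. rewrite LenS1 in Hk2.
      assert (Hk : (k < length (boxes St))%nat) by lia. rewrite (Told k Hk).
      rewrite length_app; simpl.
      destruct (Nat.eq_dec k i) as [->|Hki]; [unfold typeof; fold T; lia|].
      pose proof (Hfresh k (conj Hk1 Hk) Hki) as HH. unfold typeof in HH |- *; fold T in HH; lia.
    + right. split; [rewrite EL, length_app; lia|split; [exact N0|]].
      intros i' d' e' Hcand. rewrite Ty1, length_app; simpl.
      destruct Hc as [[_ [_ [_ Hmax]]] | [_ [_ Hmax]]]; pose proof (Hmax _ _ _ Hcand) as HH;
        unfold typeof in HH; fold T in HH; lia.
    + rewrite Ty1, <- app_assoc. exact Hm.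
    + split; [exact IS'|split; [rewrite PS'; reflexivity|split; [exact Hj|split]]].
      * exists (nb :: L2). split.
        { rewrite EL2. unfold St1, add_box; simpl. rewrite <- app_assoc. reflexivity. }
        intros b [Hb|Hb] p Pb.
        -- subst b; simpl in Pb; inversion Pb; auto.
        -- destruct (PL2 b Hb p Pb); right; lia.
      * split; [intros; discriminate|split].
        -- intros _. destruct ext as [|e ext'].
           ++ destruct (Hnil eq_refl) as [-> ->]. split; [lia|exact N0].
           ++ destruct Hcons as [Hj1 Hj2]; [discriminate|]. split; [lia|exact Hj2].
        -- intros k Hk Hne.
           assert (M : (nchildren St1 k <= nchildren St' k)%nat) by (apply (nchildren_mono St1 St' L2 k EL2)).
           destruct (Nat.eq_dec k i) as [->|Hki].
           ++ assert (1 <= nchildren St1 i)%nat.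
              { unfold St1; rewrite nchildren_add; unfold nb, is_child_of; simpl; rewrite Nat.eqb_refl; lia. }
              lia.
           ++ destruct Hk as [Hk|Hk]; [|congruence].
              apply Hkids; auto. destruct (Nat.eq_dec k (length (boxes St))); [right; auto|left; lia].
Qed.

Definition G st := Inv st /\ (forall k, (1 <= nchildren st k)%nat -> no_piece_in st k) /\
  (forall k, (k < length (boxes st))%nat -> no_piece_in st k -> (1 <= nchildren st k)%nat) /\
  (forall q, In q (pieces st) -> (pbox q < length (boxes st))%nat).

Lemma G_init : G init_state.
Proof.
  assert (N : forall k, nchildren init_state k = 0%nat) by reflexivity.
  split; [split; [|split]|split; [|split]].
  - intros b [].
  - intros i b c H; rewrite N in H; discriminate.
  - intros i j bi bj ci cj _ _ H; rewrite N in H; discriminate.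
  - intros k H; rewrite N in H; lia.
  - intros k H; simpl in H; lia.
  - intros q [].
Qed.

Lemma add_root_pres St T x : Inv St -> Inv (add_box St (Box T x None)).
Proof.
  intros [H1 [H2 H5]].
  set (nb := Box T x None).
  assert (Nk : forall k, nchildren (add_box St nb) k = nchildren St k).
  { intros k; rewrite nchildren_add; unfold nb, is_child_of; simpl; lia. }
  assert (Hin : forall b, In b (boxes (add_box St nb)) -> bparent b <> None -> In b (boxes St)).
  { intros b Hb Hp; simpl in Hb; apply in_app_iff in Hb as [Hb|[Hb|[]]]; auto.
    subst b; simpl in Hp; congruence. }
  assert (Nlt : forall k, nchildren St k = 1%nat -> (k < length (boxes St))%nat).
  { intros k Hk; destruct (nchildren_one_child _ _ Hk) as [b [Hb Pb]]. apply (H1 b Hb k Pb). }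
  split; [|split].
  - intros b Hb p Pb. assert (Hb' : In b (boxes St)) by (apply Hin; congruence).
    destruct (H1 b Hb' p Pb) as [Hp Hc]. rewrite box_at_add_old by auto.
    simpl; rewrite length_app; simpl. split; [lia|auto].
  - intros k b c Hk Hb Pb Tb. rewrite Nk in Hk. pose proof (Nlt k Hk).
    rewrite box_at_add_old in * by auto. apply H2; auto. apply Hin; congruence.
  - intros k j bk bj ck cj Hne Ht Hk Hj Hbk Pk Hbj Pj Tk Tj.
    rewrite Nk in Hk, Hj. pose proof (Nlt k Hk). pose proof (Nlt j Hj).
    rewrite !box_at_add_old in * by auto.
    apply (H5 k j bk bj ck cj); auto; apply Hin; congruence.
Qed.

Lemma finish st0 St' Ltot j q : G st0 -> boxes St' = boxes st0 ++ Ltot -> Lok st0 Ltot ->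
  pieces St' = pieces st0 -> Inv St' -> (length (boxes st0) <= j < length (boxes St'))%nat ->
  nchildren St' j = 0%nat ->
  (forall k, (length (boxes st0) <= k < length (boxes St'))%nat -> k <> j -> (1 <= nchildren St' k)%nat) ->
  pbox q = j -> G (add_piece St' q).
Proof.
  intros [I0 [I6 [I3 I7]]] EB HL EP HInv Hj Nj Hfr Hq.
  assert (NE : forall k, nchildren (add_piece St' q) k = nchildren St' k) by reflexivity.
  split; [exact HInv|split; [|split]].
  - intros k Hk q' Hq'. rewrite NE in Hk. simpl in Hq'. apply in_app_iff in Hq' as [Hq'|[Hq'|[]]].
    + rewrite EP in Hq'. pose proof (I7 q' Hq').
      destruct (Nat.le_gt_cases 1 (nchildren st0 k)) as [H1|H1].
      * exact (I6 k H1 q' Hq').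
      * destruct (nchildren_exists _ _ Hk) as [b [Hb Pb]]. rewrite EB in Hb.
        apply in_app_iff in Hb as [Hb|Hb].
        -- pose proof (nchildren_pos st0 k b Hb Pb); lia.
        -- destruct (HL b Hb k Pb) as [Hge|Hnp]; [lia|exact (Hnp q' Hq')].
    + subst q'. rewrite Hq. intros ->. lia.
  - intros k Hk Hnp. rewrite NE. simpl in Hk.
    destruct (Nat.lt_ge_cases k (length (boxes st0))) as [Hlt|Hge].
    + assert (no_piece_in st0 k).
      { intros q' Hq'. apply Hnp. simpl. apply in_app_iff. left. rewrite EP; auto. }
      pose proof (I3 k Hlt H). pose proof (nchildren_mono st0 St' Ltot k EB). lia.
    + apply Hfr; [lia|]. intros ->. apply (Hnp q); [simpl; apply in_app_iff; right; left; auto|auto].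
  - intros q' Hq'. simpl in *. apply in_app_iff in Hq' as [Hq'|[Hq'|[]]].
    + rewrite EP in Hq'. pose proof (I7 q' Hq'). rewrite EB, length_app. lia.
    + subst q'. lia.
Qed.

Lemma step_pres st P st' : G st -> step st P st' -> G st'.
Proof.
  intros HG Hs. pose proof HG as [I0 [I6 [I3 I7]]].
  destruct Hs as [i d ext St' j u Hcand Hmax Hch Hfit | x ext St' j u Hnoc Hleft Hm Hch Hfit].
  - destruct Hcand as [Hi [Hnp [Hmt Hroom]]] eqn:HC.
    destruct (chain_pres st P I6 st i (d :: ext) St' j Hch nil I0 Hi (eq_sym (app_nil_r _)))
      as [IS' [PS' [Hj [[L2 [EL2 PL2]] [_ [Hcons Hkids]]]]]].
    + intros b [].
    + intros k Hk; lia.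
    + left. split; [auto|split; [auto|split; [apply I3; auto|]]].
      intros i' d' e' Hc. apply (Hmax i' d' e' Hc).
    + exact Hmt.
    + destruct (Hcons ltac:(discriminate)) as [Hj1 Hj2].
      apply (finish st St' L2 j (Placed P u j) HG EL2); [| rewrite PS'; reflexivity | exact IS' | lia | exact Hj2 | | reflexivity].
      * intros b Hb p Pb. destruct (PL2 b Hb p Pb) as [->|]; auto.
      * intros k Hk Hne. apply Hkids; auto.
  - set (bb := Box nil x None) in *. set (St := add_box st bb) in *.
    assert (ISt : Inv St) by (apply add_root_pres; auto).
    assert (LSt : length (boxes St) = Datatypes.S (length (boxes st))).
    { unfold St, add_box; simpl; rewrite length_app; simpl; lia. }
    destruct (chain_pres st P I6 St (length (boxes st)) ext St' j Hch [bb] ISt)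
      as [IS' [PS' [Hj [[L2 [EL2 PL2]] [Hnil [Hcons Hkids]]]]]].
    + lia.
    + reflexivity.
    + intros b [Hb|[]] p Pb; subst b; simpl in Pb; discriminate.
    + intros k Hk Hne; lia.
    + right. split; [lia|split].
      * unfold St; rewrite nchildren_add, (nchildren_fresh st (proj1 I0)). reflexivity.
      * intros i' d' e' Hc; exfalso; exact (Hnoc _ _ _ Hc).
    + unfold typeof, St; rewrite box_at_add_new. exact Hm.
    + apply (finish st St' (bb :: L2) j (Placed P u j) HG).
      * rewrite EL2. unfold St, add_box; simpl. rewrite <- app_assoc. reflexivity.
      * intros b [Hb|Hb] p Pb; [subst b; simpl in Pb; discriminate|].
        left. destruct (PL2 b Hb p Pb); lia.
      * rewrite PS'; reflexivity.
      * exact IS'.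
      * destruct ext as [|e ext'].
        -- destruct (Hnil eq_refl) as [-> ->]. lia.
        -- destruct (Hcons ltac:(discriminate)). lia.
      * destruct ext as [|e ext'].
        -- destruct (Hnil eq_refl) as [-> ->]. unfold St; rewrite nchildren_add, (nchildren_fresh st (proj1 I0)). reflexivity.
        -- destruct (Hcons ltac:(discriminate)). auto.
      * intros k Hk Hne. apply Hkids; auto.
        destruct (Nat.eq_dec k (length (boxes st))); [right; auto|left; lia].
      * reflexivity.
Qed.

Lemma reach_G st : reachable st -> G st.
Proof. induction 1; [apply G_init| eapply step_pres; eauto]. Qed.
Close Scope R_scope.

Theorem lemma16 :
  forall st : state, reachable st ->
  forall (T : btype) (I : list nat),
    NoDup I ->
    (forall i, In i I ->
       (i < length (boxes st))%nat /\ btyp (box_at st i) = T /\ near_empty st i) ->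
    (length I <= 2)%nat.
Proof.
  intros st Hr T I Hnd HI.
  destruct (reach_G st Hr) as [[H1 [H2 H5]] _].
  assert (Ch : forall i, In i I -> exists b c, In b (boxes st) /\ bparent b = Some i /\
             btyp b = btyp (box_at st i) ++ [c]).
  { intros i Hi. destruct (HI i Hi) as [_ [_ Hn]].
    destruct (nchildren_one_child st i Hn) as [b [Hb Pb]].
    destruct (H1 b Hb i Pb) as [_ [c Hc]]. exists b, c; auto. }
  destruct I as [|a [|b [|c rest]]]; simpl; try lia.
  exfalso.
  inversion Hnd as [|? ? Na Nd1]; subst. inversion Nd1 as [|? ? Nb Nd2]; subst.
  assert (Ia : In a (a :: b :: c :: rest)) by (simpl; auto).
  assert (Ib : In b (a :: b :: c :: rest)) by (simpl; auto).
  assert (Ic : In c (a :: b :: c :: rest)) by (simpl; auto).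
  destruct (Ch a Ia) as [ba [ca [Hba [Pba Tba]]]].
  destruct (Ch b Ib) as [bb [cb [Hbb [Pbb Tbb]]]].
  destruct (Ch c Ic) as [bc [cc [Hbc [Pbc Tbc]]]].
  destruct (HI a Ia) as [_ [Ta Na']]. destruct (HI b Ib) as [_ [Tb Nb']].
  destruct (HI c Ic) as [_ [Tc Nc']].
  assert (Oab : opp ca cb).
  { apply (H5 a b ba bb ca cb); auto; [intro; subst; apply Na; simpl; auto| congruence]. }
  assert (Oac : opp ca cc).
  { apply (H5 a c ba bc ca cc); auto; [intro; subst; apply Na; simpl; auto| congruence]. }
  assert (Obc : opp cb cc).
  { apply (H5 b c bb bc cb cc); auto; [intro; subst; apply Nb; simpl; auto| congruence]. }
  unfold opp in *. destruct ca, cb, cc; intuition discriminate.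
Qed.
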